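(* Let $w:\mathbb{R}\to(0,\infty)$ be a positive weighting function (depending on fixed parameters $\bm\theta$) such that $\int_{\mathbb{R}}k_s(y;x)w(y)\,\mathrm{d}y<\infty$ for all $x\in\mathbb{R}$ and $s>0$, where $k_s(\cdot;x)$ is the Gaussian density with mean $x$ and standard deviation $s$. Let $\sigma>0$. Define $$p_1(x\mid y,s,\bm\theta)=\frac{k_s(x;y)\,w(x)}{\int_{\mathbb{R}}k_s(z;y)\,w(z)\,\mathrm{d}z},\qquad p_2(x\mid y,\sigma,\bm\theta)=\int_{\mathbb{R}}p_1(x\mid z,\sigma,\bm\theta)\,p_1(z\mid y,\sigma,\bm\theta)\,\mathrm{d}z.$$ Then for all $x_1,x_2\in\mathbb{R}$, $$p_2(x_1\mid x_2,\sigma,\bm\theta)=p_1(x_1\mid x_2,\sqrt2\,\sigma,\bm\theta)\cdot v(x_1,x_2),$$ where $$v(x_1,x_2)=\frac{\int_{\mathbb{R}}k_{\sqrt2\sigma}(y;x_2)\,w(y)\,\mathrm{d}y}{\int_{\mathbb{R}}k_{\sigma}(y;x_2)\,w(y)\,\mathrm{d}y}\int_{\mathbb{R}}k_{\sigma/\sqrt2}\Bigl(z;\tfrac12(x_1+x_2)\Bigr)\frac{w(z)}{\int_{\mathbb{R}}k_\sigma(y;z)\,w(y)\,\mathrm{d}y}\,\mathrm{d}z.$$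
   Context: $p_1$ is the one-step transition density of a one-dimensional discrete-time spatially-explicit random walk (Gaussian kernel times weighting function, renormalized), and $p_2$ is its two-step transition density. Here $x_1$ is the location at time $t$ and $x_2$ the location at time $t-2\tau$. *)

(* Defs.v *)
From HB Require Import structures.
From mathcomp Require Import all_boot all_order all_algebra.
From mathcomp Require Import all_classical all_reals all_analysis.
Set Implicit Arguments. Unset Strict Implicit. Unset Printing Implicit Defensive.
Import Order.TTheory GRing.Theory Num.Theory.
Import numFieldNormedType.Exports.
Local Open Scope classical_set_scope.
Local Open Scope ring_scope.

Section walk.
Context {R : realType}.
Notation mu := (@lebesgue_measure R).

(* k_s(y; x): Gaussian density at y with mean x and standard deviation s *)
Definition kern (s x y : R) : R := normal_pdf x s y.

(* normalising constant  Z_s(y) = \int k_s(z; y) w(z) dz  (finite by hypothesis) *)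
Definition normc (w : R -> R) (s y : R) : R :=
  fine (\int[mu]_(z in [set: R]) (kern s y z * w z)%:E)%E.

Definition p1 (w : R -> R) (s x y : R) : R := kern s y x * w x / normc w s y.

Definition p2 (w : R -> R) (sigma x y : R) : \bar R :=
  (\int[mu]_(z in [set: R]) (p1 w sigma x z * p1 w sigma z y)%:E)%E.

Definition vfac (w : R -> R) (sigma x1 x2 : R) : \bar R :=
  ((normc w (Num.sqrt 2 * sigma) x2 / normc w sigma x2)%:E *
   \int[mu]_(z in [set: R])
      (kern (sigma / Num.sqrt 2) (2^-1 * (x1 + x2)) z * (w z / normc w sigma z))%:E)%E.
End walk.

(* Main.v *)
Require Import Defs.
From HB Require Import structures.
From mathcomp Require Import all_boot all_order all_algebra.
From mathcomp Require Import all_classical all_reals all_analysis.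
From mathcomp Require Import measurable_realfun ring lra.
Import Order.TTheory GRing.Theory Num.Theory.
Local Open Scope ring_scope.

Lemma gauss_prod (R : realType) (s x1 x2 z : R) : 0 < s ->
  normal_pdf z s x1 * normal_pdf x2 s z =
  normal_pdf x2 (Num.sqrt 2 * s) x1 *
  normal_pdf (2^-1 * (x1 + x2)) (s / Num.sqrt 2) z.
Proof.
move=> s0.
have r2 : 0 < Num.sqrt 2 :> R by rewrite sqrtr_gt0.
have r22 : Num.sqrt 2 ^+ 2 = 2 :> R by rewrite sqr_sqrtr.
have sn : s != 0 by rewrite gt_eqF.
have s2n : Num.sqrt 2 * s != 0 by rewrite mulf_neq0 // gt_eqF.
have s3n : s / Num.sqrt 2 != 0 by rewrite mulf_neq0 // ?invr_eq0 gt_eqF.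
rewrite !normal_pdfE // /normal_peak /normal_fun.
have -> : (Num.sqrt 2 * s) ^+ 2 = 2 * s ^+ 2 by rewrite exprMn r22.
have -> : (s / Num.sqrt 2) ^+ 2 = s ^+ 2 / 2 by rewrite exprMn exprVn r22.
set a := s ^+ 2 * pi *+ 2.
have a0 : 0 < a by rewrite pmulrn_rgt0 // mulr_gt0 ?exprn_gt0 ?pi_gt0.
have -> : 2 * s ^+ 2 * pi *+ 2 = 2 * a by rewrite /a; ring.
have -> : s ^+ 2 / 2 * pi *+ 2 = 2^-1 * a by rewrite /a; field.
rewrite mulrACA -expRD [RHS]mulrACA -expRD.
congr (_ * expR _).
  rewrite -!invfM -!sqrtrM ?mulr_ge0 ?invr_ge0 ?ltW //.
  congr (_^-1); congr Num.sqrt.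
  by rewrite mulrACA mulfV ?pnatr_eq0 // mul1r.
by field.
Qed.

Local Open Scope classical_set_scope.

Lemma int_pos (R : realType) (f : R -> R) : (forall y, 0 < f y) ->
  measurable_fun [set: R] f ->
  (\int[@lebesgue_measure R]_(y in [set: R]) (f y)%:E < +oo)%E ->
  0 < fine (\int[@lebesgue_measure R]_(y in [set: R]) (f y)%:E)%E.
Proof.
move=> fp mf fin.
have ge0 : (0 <= \int[@lebesgue_measure R]_(y in [set: R]) (f y)%:E)%E.
  by apply: integral_ge0 => y _; rewrite lee_fin ltW.
apply: fine_gt0; rewrite fin andbT lt_neqAle ge0 andbT.
apply/eqP => I0.
have H0 : (\int[@lebesgue_measure R]_(y in [set: R]) `|(f y)%:E|)%E = 0%R.
  by rewrite [RHS]I0; apply: eq_integral => y _; rewrite gee0_abs // lee_fin ltW.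
have mEf := (measurable_EFinP [set: R] f).2 mf.
have := (ae_eq_integral_abs (@lebesgue_measure R) measurableT mEf).1 H0.
move=> [N [mN N0 sub]].
have : (@lebesgue_measure R `[0%R, 1%R]%classic <= @lebesgue_measure R N)%E.
  apply: le_measure; rewrite ?inE //.
  move=> y _; apply: sub => /= H; have := H I => /= [[]] /eqP.
  by rewrite gt_eqF.
rewrite N0 lebesgue_measure_itv /= lte_fin ltr01 /= sube0 lee_fin.
by rewrite ler10.
Qed.

Theorem proposition1 (R : realType) (w : R -> R) (sigma : R)
  (w_pos : forall x, 0 < w x)
  (w_meas : measurable_fun [set: R] w)
  (w_int : forall x s, 0 < s ->
     (\int[@lebesgue_measure R]_(y in [set: R]) (kern s x y * w y)%:E < +oo)%E)
  (sigma_pos : 0 < sigma) :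
  forall x1 x2 : R,
    p2 w sigma x1 x2 = ((p1 w (Num.sqrt 2 * sigma) x1 x2)%:E * vfac w sigma x1 x2)%E.
Proof.
move=> x1 x2.
set s2 := Num.sqrt 2.
have s2p : 0 < s2 by rewrite sqrtr_gt0.
have npos m s y : 0 < s -> 0 < normal_pdf m s y.
  move=> s0; rewrite normal_pdfE ?gt_eqF //.
  by rewrite mulr_gt0 ?expR_gt0 // normal_peak_gt0 // gt_eqF.
have kpos s x y : 0 < s -> 0 < kern s x y * w y.
  by move=> s0; rewrite mulr_gt0 // /kern npos.
have kmeas s x : measurable_fun [set: R] (fun y => kern s x y * w y).
  by apply: measurable_funM => //; exact: measurable_normal_pdf.
have Zpos s x : 0 < s -> 0 < normc w s x.
  by move=> s0; apply: int_pos => //; [move=> y; exact: kpos | exact: w_int].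
have mZ : measurable_fun [set: R] (normc w sigma).
  pose f := fun p : R * R => (kern sigma p.1 p.2 * w p.2)%:E.
  have mf : measurable_fun [set: R * R] f.
    apply/measurable_EFinP; apply: measurable_funM; last first.
      exact: measurableT_comp w_meas measurable_snd.
    have -> : (fun p : R * R => kern sigma p.1 p.2) =
              (fun p : R * R => normal_pdf 0 sigma (p.2 - p.1)).
      apply/funext => p; rewrite /kern !normal_pdfE ?gt_eqF //.
      by rewrite /normal_fun subr0.
    apply: measurableT_comp; first exact: measurable_normal_pdf.
    exact: measurable_funB measurable_snd measurable_fst.
  have f0 p : (0 <= f p)%E by rewrite lee_fin ltW // kpos.
  have := measurable_fun_fubini_tonelli_F (m2 := @lebesgue_measure R) f mf f0.
  move=> H.
  exact: (measurableT_comp (fine_measurable measurableT) H).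
set m := 2^-1 * (x1 + x2).
set g := fun z => normal_pdf m (sigma / s2) z * (w z / normc w sigma z).
have g0 z : 0 <= g z.
  by rewrite /g mulr_ge0 ?normal_pdf_ge0 // divr_ge0 ?ltW ?Zpos.
have mg : measurable_fun [set: R] (fun z => (g z)%:E).
  apply/measurable_EFinP; apply: measurable_funM; first exact: measurable_normal_pdf.
  have -> : (fun z => w z / normc w sigma z) =
            (fun z => w z * expR (- ln (normc w sigma z))).
    by apply/funext => z; rewrite expRN lnK // posrE Zpos.
  apply: measurable_funM => //; apply: measurableT_comp; first exact: measurable_expR.
  by apply: measurable_funN; apply: measurableT_comp => //; exact: measurable_ln.
set C := normal_pdf x2 (s2 * sigma) x1 * w x1 / normc w sigma x2.
have C0 : 0 <= C by rewrite /C divr_ge0 ?mulr_ge0 ?normal_pdf_ge0 ?ltW ?Zpos.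
rewrite /p2.
transitivity (\int[@lebesgue_measure R]_(z in [set: R]) (C%:E * (g z)%:E))%E.
  apply: eq_integral => z _; rewrite -EFinM; congr EFin.
  rewrite /p1 /kern /C /g.
  have E := @gauss_prod R sigma x1 x2 z sigma_pos.
  transitivity ((normal_pdf z sigma x1 * normal_pdf x2 sigma z) *
    (w x1 * w z / normc w sigma z / normc w sigma x2)); first by ring.
  rewrite E -/s2 -/m; ring.
rewrite ge0_integralZl_EFin //; last by move=> z _; rewrite lee_fin.
rewrite /vfac muleA -EFinM; congr (_%:E * _)%E.
rewrite /C /p1 /kern -/s2.
have Z1 := Zpos (s2 * sigma) x2 (mulr_gt0 s2p sigma_pos).
have Z2 := Zpos sigma x2 sigma_pos.
by field; rewrite ?gt_eqF.
Qed.
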